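(* Let $A\subseteq B$ be an admissible extension (under the standing assumptions below). Then for every $\psi\in\mathrm{Min}(A)$ there exists $\mu\in\mathrm{Min}(B)$ such that $\mu\cap\nabla_A=\psi$.
   Context: For an algebra $M$ of a fixed signature: $\mathrm{Con}(M)$ is its congruence lattice with bottom $\Delta_M$ and top $\nabla_M=M^2$. $[\cdot,\cdot]_M$ is the term condition commutator: for $\alpha,\beta,\mu\in\mathrm{Con}(M)$, $C(\alpha,\beta;\mu)$ means that for all $n,k$, every $(n+k)$-ary term $t$, all $(a_i,b_i)\in\alpha$ and $(c_j,d_j)\in\beta$: $(t(\bar a,\bar c),t(\bar a,\bar d))\in\mu$ iff $(t(\bar b,\bar c),t(\bar b,\bar d))\in\mu$; $[\alpha,\beta]_M=\bigcap\{\mu: C(\alpha,\beta;\mu)\}$. A congruence $\phi\neq\nabla_M$ is prime if $[\alpha,\beta]_M\subseteq\phi$ implies $\alpha\subseteq\phi$ or $\beta\subseteq\phi$; $\mathrm{Spec}(M)$ is the set of primes, $\mathrm{Min}(M)$ its minimal elements; $\rho_M(\theta)$ is the intersection of all primes containing $\theta$ ($\nabla_M$ if none); $M$ is semiprime if $\rho_M(\Delta_M)=\Delta_M$. Standing assumptions: $B$ is an algebra, $A$ is a subalgebra of $B$, $A$ and $B$ are semiprime, and the commutators of $A$ and $B$ are commutative and distributive w.r.t. arbitrary joins (i.e. $[\alpha,\beta]=[\beta,\alpha]$ and $[\bigvee_i\alpha_i,\beta]=\bigvee_i[\alpha_i,\beta]$). The extension $A\subseteq B$ is admissible iff $\phi\cap\nabla_A\in\mathrm{Spec}(A)$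 for all $\phi\in\mathrm{Spec}(B)$. *)

(* Defs.v *)
From mathcomp Require Import all_boot.
Set Implicit Arguments. Unset Strict Implicit. Unset Printing Implicit Defensive.

Record signature := Signature { op : Type; arity : op -> nat }.

Record algebra (S : signature) := Algebra {
  carrier :> Type;
  interp : forall o : op S, ('I_(arity o) -> carrier) -> carrier }.

Inductive term (S : signature) (X : Type) : Type :=
  | Var : X -> term S X
  | App : forall o : op S, ('I_(arity o) -> term S X) -> term S X.

Fixpoint eval (S : signature) (M : algebra S) (X : Type) (v : X -> M)
    (t : term S X) : M :=
  match t with
  | Var x => v x
  | App o f => @interp S M o (fun i => eval v (f i))
  end.

Definition rel_on (T : Type) := T -> T -> Prop.
Definition rsub (T : Type) (a b : rel_on T) := forall x y, a x y -> b x y.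
Definition req (T : Type) (a b : rel_on T) := forall x y, a x y <-> b x y.

Definition is_cong (S : signature) (M : algebra S) (th : rel_on M) : Prop :=
  [/\ (forall x, th x x),
      (forall x y, th x y -> th y x),
      (forall x y z, th x y -> th y z -> th x z) &
      (forall (o : op S) (a b : 'I_(arity o) -> M),
          (forall i, th (a i) (b i)) -> th (@interp S M o a) (@interp S M o b))].

Definition Delta (T : Type) : rel_on T := fun x y => x = y.
Definition Nabla (T : Type) : rel_on T := fun _ _ => True.

Definition TC (S : signature) (M : algebra S) (al be mu : rel_on M) : Prop :=
  forall (n k : nat) (t : term S ('I_n + 'I_k)%type)
         (a b : 'I_n -> M) (c d : 'I_k -> M),
    (forall i, al (a i) (b i)) -> (forall j, be (c j) (d j)) ->
    (mu (eval (fun z => match z with inl i => a i | inr j => c j end) t)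
        (eval (fun z => match z with inl i => a i | inr j => d j end) t)
     <->
     mu (eval (fun z => match z with inl i => b i | inr j => c j end) t)
        (eval (fun z => match z with inl i => b i | inr j => d j end) t)).

Definition comm (S : signature) (M : algebra S) (al be : rel_on M) : rel_on M :=
  fun x y => forall mu : rel_on M, @is_cong S M mu -> @TC S M al be mu -> mu x y.

Definition cjoin (S : signature) (M : algebra S) (I : Type) (F : I -> rel_on M)
  : rel_on M :=
  fun x y => forall th : rel_on M, @is_cong S M th -> (forall i, rsub (F i) th) -> th x y.

Definition is_prime (S : signature) (M : algebra S) (phi : rel_on M) : Prop :=
  [/\ is_cong phi,
      ~ req phi (@Nabla M) &
      forall al be : rel_on M, @is_cong S M al -> @is_cong S M be ->
        rsub (@comm S M al be) phi -> rsub al phi \/ rsub be phi].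

Definition is_min_prime (S : signature) (M : algebra S) (phi : rel_on M) : Prop :=
  @is_prime S M phi /\
  (forall psi : rel_on M, @is_prime S M psi -> rsub psi phi -> req psi phi).

Definition rho (S : signature) (M : algebra S) (th : rel_on M) : rel_on M :=
  fun x y => forall phi : rel_on M, @is_prime S M phi -> rsub th phi -> phi x y.

Definition semiprime (S : signature) (M : algebra S) : Prop :=
  req (@rho S M (@Delta M)) (@Delta M).

Definition comm_commutative (S : signature) (M : algebra S) : Prop :=
  forall al be : rel_on M, @is_cong S M al -> @is_cong S M be ->
    req (@comm S M al be) (@comm S M be al).

Definition comm_join_distributive (S : signature) (M : algebra S) : Prop :=
  forall (I : Type) (F : I -> rel_on M) (be : rel_on M),
    (forall i, @is_cong S M (F i)) -> @is_cong S M be ->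
    req (@comm S M (@cjoin S M I F) be) (@cjoin S M I (fun i => @comm S M (F i) be)).

Definition op_closed (S : signature) (B : algebra S) (P : B -> Prop) : Prop :=
  forall (o : op S) (a : 'I_(arity o) -> B),
    (forall i, P (a i)) -> P (@interp S B o a).

Definition subalg (S : signature) (B : algebra S) (P : B -> Prop)
  (HP : op_closed P) : algebra S :=
  @Algebra S {x : B | P x}
    (fun o a => exist P (@interp S B o (fun i => proj1_sig (a i)))
                       (HP o _ (fun i => proj2_sig (a i)))).

(** phi ∩ ∇_A, as a relation on A. *)
Definition restr (S : signature) (B : algebra S) (P : B -> Prop)
  (HP : op_closed P) (phi : rel_on B) : rel_on (subalg HP) :=
  fun x y => phi (proj1_sig x) (proj1_sig y).

Definition admissible (S : signature) (B : algebra S) (P : B -> Prop)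
  (HP : op_closed P) : Prop :=
  forall phi : rel_on B, @is_prime S B phi -> @is_prime S (subalg HP) (@restr S B P HP phi).

(* Main.v *)
Require Import Defs.
From mathcomp Require Import all_boot.
From mathcomp Require boolp classical_sets.
From Stdlib Require Import Classical.

Lemma zorn_rel (X : Type) (le : rel_on X -> rel_on X -> Prop) (Q : rel_on X -> Prop) :
  (forall a, le a a) -> (forall a b c, le a b -> le b c -> le a c) ->
  (forall a b, le a b -> le b a -> req a b) ->
  (forall C : rel_on X -> Prop, (forall s, C s -> Q s) ->
     (forall s t, C s -> C t -> le s t \/ le t s) ->
     exists u, Q u /\ forall s, C s -> le s u) ->
  exists m, Q m /\ forall s, Q s -> le m s -> le s m.
Proof.
move=> lrefl ltrans lanti ub.
pose T := {r : rel_on X | Q r}.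
pose R := fun a b : T => boolp.asbool (le (proj1_sig a) (proj1_sig b)).
have RE : forall a b, R a b <-> le (proj1_sig a) (proj1_sig b).
  by move=> a b; split => [/boolp.asboolP|/boolp.asboolP].
have [t Ht] : exists t, forall s, R t s -> s = t.
  apply: classical_sets.Zorn.
  - by move=> t; apply/RE.
  - by move=> r s t /RE H1 /RE H2; apply/RE; apply: ltrans H1 H2.
  - move=> [s Qs] [t Qt] /RE H1 /RE H2.
    have E : s = t.
      apply: boolp.funext => x; apply: boolp.funext => y.
      by apply: boolp.propext; apply: lanti.
    subst t; by rewrite (boolp.Prop_irrelevance Qs Qt).
  - move=> A Atot.
    pose C := fun r => exists t : T, A t /\ proj1_sig t = r.
    have h1 : forall s, C s -> Q s by move=> s [t [_ <-]]; exact: proj2_sig t.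
    have h2 : forall s t, C s -> C t -> le s t \/ le t s.
      move=> s t [s' [As' <-]] [t' [At' <-]].
      by case: (Atot _ _ As' At') => /RE H; [left|right].
    have [u [Qu Hu]] := ub C h1 h2.
    exists (exist _ u Qu) => s As; apply/RE; apply: Hu; by exists s.
exists (proj1_sig t); split; first exact: proj2_sig t.
move=> s Qs Hts.
have := Ht (exist _ s Qs) (proj2 (RE t (exist _ s Qs)) Hts) => <-; exact: lrefl.
Qed.

Section L.
Variable S : signature.

Lemma eval_cong (M : algebra S) (th : rel_on M) (X : Type) (v w : X -> M) (t : term S X) :
  is_cong th -> (forall z, th (v z) (w z)) -> th (eval v t) (eval w t).
Proof.
move=> [r s tr op] H; elim: t => [x|o f IH] /=; first exact: H.
by apply: op => i; apply: IH.
Qed.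

Lemma comm_sub_r (M : algebra S) (al be : rel_on M) :
  is_cong be -> rsub (comm al be) be.
Proof.
move=> Hb x y Hxy; apply: Hxy => //.
move=> n k t a b c d _ Hcd; split=> _; apply: eval_cong => // -[i|j] //=;
  by case: Hb.
Qed.

Lemma comm_sub_l (M : algebra S) (al be : rel_on M) :
  comm_commutative M -> is_cong al -> is_cong be -> rsub (comm al be) al.
Proof.
move=> Hc Ha Hb x y /(Hc _ _ Ha Hb x y); exact: comm_sub_r.
Qed.

Lemma cjoin_cong (M : algebra S) (I : Type) (F : I -> rel_on M) : is_cong (cjoin F).
Proof.
split.
- by move=> x th [] .
- by move=> x y H th Hth HF; case: (Hth) => _ s _ _; apply: s; apply: H.
- by move=> x y z H1 H2 th Hth HF; case: (Hth) => _ _ tr _; apply: tr (H1 _ Hth HF) (H2 _ Hth HF).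
- move=> o a b H th Hth HF; case: (Hth) => _ _ _ op; apply: op => i; exact: H.
Qed.

Lemma cjoin_least (M : algebra S) (I : Type) (F : I -> rel_on M) th :
  is_cong th -> (forall i, rsub (F i) th) -> rsub (cjoin F) th.
Proof. by move=> H1 H2 x y H; apply: H. Qed.

Lemma cjoin_ub (M : algebra S) (I : Type) (F : I -> rel_on M) i :
  rsub (F i) (cjoin F).
Proof. by move=> x y H th _ HF; apply: HF H. Qed.

Variables (B : algebra S) (P : B -> Prop) (HP : op_closed P).
Local Notation RR := (@restr S B P HP).

Lemma val_eval (X : Type) (v : X -> subalg HP) (t : term S X) :
  proj1_sig (eval v t) = eval (fun z => proj1_sig (v z)) t.
Proof.
elim: t => [x|o f IH] //=.
by f_equal; apply: boolp.funext => i; apply: IH.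
Qed.

Lemma restr_cong th : is_cong th -> is_cong (RR th).
Proof.
move=> [r s tr op]; split.
- by move=> x; apply: r.
- by move=> x y; apply: s.
- by move=> x y z; apply: tr.
- by move=> o a b H; apply: op.
Qed.

Lemma comm_restr al be :
  rsub (comm (RR al) (RR be)) (RR (comm al be)).
Proof.
move=> x y H mu Hmu TCmu.
suff HT : TC (RR al) (RR be) (RR mu) by exact: (H (RR mu) (restr_cong mu Hmu) HT).
move=> n k t a b c d Hab Hcd; rewrite /restr !val_eval.
have E : forall (a : 'I_n -> subalg HP) (c : 'I_k -> subalg HP),
  (fun z : 'I_n + 'I_k => proj1_sig (match z with inl i => a i | inr j => c j end))
  = (fun z => match z with inl i => proj1_sig (a i) | inr j => proj1_sig (c j) end).
  by move=> a' c'; apply: boolp.funext => -[].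
rewrite !E; apply: TCmu; [exact: Hab | exact: Hcd].
Qed.

End L.
Arguments cjoin_cong {S M I} F.
Arguments cjoin_ub {S M I} F i.
Arguments cjoin_least {S M I F th}.
Arguments comm_sub_l {S M al be}.
Arguments comm_sub_r {S M al be}.
Arguments restr_cong {S B P} HP {th}.
Arguments comm_restr {S B P} HP {al be}.

Lemma chain_fin (S : signature) (B : algebra S) (C : rel_on B -> Prop) :
  (forall s, C s -> is_cong s) ->
  (forall s t, C s -> C t -> rsub s t \/ rsub t s) ->
  forall n (a b : 'I_n -> B),
  (forall i, a i = b i \/ exists s, C s /\ s (a i) (b i)) ->
  (forall i, a i = b i) \/ exists s, C s /\ forall i, s (a i) (b i).
Proof.
move=> Hc Htot n a b H.
suff: forall m, (forall i : 'I_n, i < m -> a i = b i) \/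
                exists s, C s /\ forall i : 'I_n, i < m -> s (a i) (b i).
  case/(_ n) => [h|[s [Cs h]]]; [left|right] => [i|]; first exact: h.
  by exists s; split=> // i; apply: h.
elim=> [|m [IH|[s [Cs IH]]]]; first by left.
- case: (classic (exists i0 : 'I_n, nat_of_ord i0 = m)) => [[i0 Hi0]|Hno].
  + case: (H i0) => [E|[s0 [Cs0 h0]]].
    * left=> i; rewrite ltnS leq_eqVlt => /orP [/eqP Ei|]; last exact: IH.
      by have -> : i = i0 by apply: val_inj; rewrite /= Ei Hi0.
    * right; exists s0; split=> // i; rewrite ltnS leq_eqVlt => /orP [/eqP Ei|Hi].
      - by have -> : i = i0 by apply: val_inj; rewrite /= Ei Hi0.
      - by rewrite (IH i Hi); case: (Hc _ Cs0).
  + left=> i; rewrite ltnS leq_eqVlt => /orP [/eqP Ei|]; last exact: IH.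
    by exfalso; apply: Hno; exists i.
- case: (classic (exists i0 : 'I_n, nat_of_ord i0 = m)) => [[i0 Hi0]|Hno].
  + case: (H i0) => [E|[s0 [Cs0 h0]]].
    * right; exists s; split=> // i; rewrite ltnS leq_eqVlt => /orP [/eqP Ei|Hi].
      - have -> : i = i0 by apply: val_inj; rewrite /= Ei Hi0.
        by rewrite E; case: (Hc _ Cs).
      - exact: IH.
    * case: (Htot _ _ Cs Cs0) => Hst.
      - right; exists s0; split=> // i; rewrite ltnS leq_eqVlt => /orP [/eqP Ei|Hi].
        + by have -> : i = i0 by apply: val_inj; rewrite /= Ei Hi0.
        + by apply: Hst; apply: IH.
      - right; exists s; split=> // i; rewrite ltnS leq_eqVlt => /orP [/eqP Ei|Hi].
        + have -> : i = i0 by apply: val_inj; rewrite /= Ei Hi0.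
          by apply: Hst.
        + exact: IH.
  + right; exists s; split=> // i; rewrite ltnS leq_eqVlt => /orP [/eqP Ei|]; last exact: IH.
    by exfalso; apply: Hno; exists i.
Qed.

Theorem mainTheorem14 (S : signature) (B : algebra S) (P : B -> Prop)
    (HP : op_closed P) :
  @semiprime S B -> @semiprime S (subalg HP) ->
  @comm_commutative S B -> @comm_join_distributive S B ->
  @comm_commutative S (subalg HP) -> @comm_join_distributive S (subalg HP) ->
  @admissible S B P HP ->
  forall psi : rel_on (subalg HP), @is_min_prime S (subalg HP) psi ->
    exists mu : rel_on B, @is_min_prime S B mu /\ req (@restr S B P HP mu) psi.
Proof.
move=> _ _ HcB HdB _ _ Hadm psi [Hpsi Hpsimin].
have [Hpc HpN Hpp] := Hpsi.
pose RR := @restr S B P HP.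
have [th [[Hth Hthpsi] Hmax]] : exists m, (is_cong m /\ rsub (RR m) psi) /\
   forall s, (is_cong s /\ rsub (RR s) psi) -> rsub m s -> rsub s m.
{ apply: (@zorn_rel B (@rsub B)
    (fun th => is_cong th /\ rsub (RR th) psi)
    (fun a x y h => h) (fun a b c h1 h2 x y h => h2 _ _ (h1 _ _ h)) 
    (fun a b h1 h2 x y => conj (h1 x y) (h2 x y))).
  move=> C HC Htot.
  have Hcc : forall s, C s -> is_cong s by move=> s /HC [].
  pose U := fun x y : B => x = y \/ exists s, C s /\ s x y.
  exists U; split; last by move=> s Cs x y h; right; exists s.
  split.
  - split.
    + by move=> x; left.
    + move=> x y [->|[s [Cs h]]]; [by left|right; exists s; split=> //].
      by case: (Hcc _ Cs) => _ sy _ _; apply: sy.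
    + move=> x y z h1 h2; case: h1 => [->|h1]; first by [].
      case: h2 => [<-|[t [Ct h2]]]; first by right.
      case: h1 => [s [Cs h1]].
      right; case: (Htot _ _ Cs Ct) => Hst.
      * exists t; split=> //; case: (Hcc _ Ct) => _ _ tr _; exact: tr (Hst _ _ h1) h2.
      * exists s; split=> //; case: (Hcc _ Cs) => _ _ tr _; exact: tr h1 (Hst _ _ h2).
    + move=> o a b Hab.
      case: (@chain_fin S B C Hcc Htot _ a b Hab) => [E|[s [Cs h]]].
      * by left; have -> : a = b by apply: boolp.funext.
      * by right; exists s; split=> //; case: (Hcc _ Cs) => _ _ _ op; apply: op.
  - move=> [x px] [y py] [/= E|[s [Cs h]]].
    + subst y; rewrite (boolp.Prop_irrelevance px py); by case: Hpc.
    + by case: (HC _ Cs) => _ Hs; apply: (Hs (exist _ x px) (exist _ y py)).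
}
have thprime : is_prime th.
  split=> //.
  - move=> E; apply: HpN => x y; split=> // _; apply: Hthpsi; exact: (proj2 (E _ _) I).
  - move=> al be Hal Hbe Hsub.
    case: (classic (rsub al th)) => Ha; first by left.
    case: (classic (rsub be th)) => Hb; first by right.
    exfalso.
    pose F1 := fun b : bool => if b then th else al.
    pose F2 := fun b : bool => if b then th else be.
    have HF1 : forall i, is_cong (F1 i) by case.
    have HF2 : forall i, is_cong (F2 i) by case.
    have Hn1 : ~ rsub (RR (cjoin F1)) psi.
      move=> h; apply: Ha => x y hxy.
      have := Hmax (cjoin F1) (conj (cjoin_cong F1) h) (cjoin_ub F1 true).
      by move/(_ x y); apply; apply: (cjoin_ub F1 false).
    have Hn2 : ~ rsub (RR (cjoin F2)) psi.
      move=> h; apply: Hb => x y hxy.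
      have := Hmax (cjoin F2) (conj (cjoin_cong F2) h) (cjoin_ub F2 true).
      by move/(_ x y); apply; apply: (cjoin_ub F2 false).
    have Hcomm : rsub (comm (cjoin F1) (cjoin F2)) th.
      move=> x y /(HdB _ F1 _ HF1 (cjoin_cong F2) x y).
      apply: cjoin_least => // -[].
      + exact: comm_sub_l HcB Hth (cjoin_cong F2).
      + move=> u v /(HcB _ _ Hal (cjoin_cong F2) u v).
        move/(HdB _ F2 _ HF2 Hal u v); apply: cjoin_least => // -[].
        * exact: comm_sub_l HcB Hth Hal.
        * by move=> p q /(HcB _ _ Hbe Hal p q); apply: Hsub.
    have := Hpp (RR (cjoin F1)) (RR (cjoin F2))
       (restr_cong HP (cjoin_cong F1)) (restr_cong HP (cjoin_cong F2)).
    case.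
    + move=> x y /(comm_restr HP) h; apply: Hthpsi; exact: Hcomm.
    + exact: Hn1.
    + exact: Hn2.
have [thc thN thp] := thprime.
have [mu [[Hmu Hmuth] Hmin]] : exists m, (is_prime m /\ rsub m th) /\
   forall s, (is_prime s /\ rsub s th) -> rsub s m -> rsub m s.
{ apply: (@zorn_rel B (fun a b => rsub b a)
    (fun m => is_prime m /\ rsub m th)
    (fun a x y h => h) (fun a b c h1 h2 x y h => h1 _ _ (h2 _ _ h))
    (fun a b h1 h2 x y => conj (h2 x y) (h1 x y))).
  move=> C HC Htot.
  pose I := fun x y : B => th x y /\ forall s, C s -> s x y.
  have Hcc : forall s, C s -> is_cong s by move=> s /HC [[]].
  exists I; split; last by move=> s Cs x y [_ h]; apply: h.
  split; last by move=> x y [].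
  pose K := fun s => s = th \/ C s.
  have KI : forall s, K s -> rsub I s by move=> s [->|Cs] x y [h1 h2] //; apply: h2.
  have Kp : forall s, K s -> is_prime s by move=> s [->|/HC []].
  have Kth : forall s, K s -> rsub s th by move=> s [->|/HC []] // x y.
  have Ktot : forall s t, K s -> K t -> rsub s t \/ rsub t s.
    move=> s t [->|Cs] [->|Ct].
    + by left.
    + by right; apply: Kth; right.
    + by left; apply: Kth; right.
    + exact: Htot.
  have Kfind : forall ga : rel_on B, ~ rsub ga I ->
      exists s x y, K s /\ ga x y /\ ~ s x y.
    move=> ga Hga; apply: NNPP => Hno; apply: Hga => x y hg; split.
    + by apply: NNPP => hn; apply: Hno; exists th, x, y; split; [left|].
    + move=> s Cs; apply: NNPP => hn; apply: Hno; exists s, x, y; split=> //; by right.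
  split.
  - split.
    + move=> x; split; first by case: thc.
      by move=> s Cs; case: (Hcc _ Cs).
    + move=> x y [h1 h2]; split; first by case: thc => _ sy _ _; apply: sy.
      by move=> s Cs; case: (Hcc _ Cs) => _ sy _ _; apply: sy; apply: h2.
    + move=> x y z [h1 h2] [h3 h4]; split; first by case: thc => _ _ tr _; apply: tr h1 h3.
      by move=> s Cs; case: (Hcc _ Cs) => _ _ tr _; apply: tr (h2 _ Cs) (h4 _ Cs).
    + move=> o a b Hab; split; first by case: thc => _ _ _ op; apply: op => i; case: (Hab i).
      by move=> s Cs; case: (Hcc _ Cs) => _ _ _ op; apply: op => i; case: (Hab i) => _; apply.
  - move=> E; apply: thN => x y; split=> // _; exact: (proj1 (proj2 (E _ _) Logic.I)).
  - move=> al be Hal Hbe Hsub.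
    case: (classic (rsub al I)) => Ha; first by left.
    case: (classic (rsub be I)) => Hb; first by right.
    exfalso.
    have [s1 [x1 [y1 [K1 [a1 n1]]]]] := Kfind _ Ha.
    have [s2 [x2 [y2 [K2 [b2 n2]]]]] := Kfind _ Hb.
    have sub1 : forall s, K s -> rsub (comm al be) s.
      by move=> s Ks x y h; apply: KI => //; apply: Hsub.
    case: (Ktot _ _ K1 K2) => H12.
    + have [_ _ pr] := Kp _ K1.
      case: (pr _ _ Hal Hbe (sub1 _ K1)) => h.
      * exact: n1 (h _ _ a1).
      * by apply: n2; apply: H12; apply: h.
    + have [_ _ pr] := Kp _ K2.
      case: (pr _ _ Hal Hbe (sub1 _ K2)) => h.
      * by apply: n1; apply: H12; apply: h.
      * exact: n2 (h _ _ b2).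
}
exists mu; split.
- split=> // psi' Hp' Hsub' x y; split; first exact: Hsub'.
  by apply: (Hmin psi' (conj Hp' (fun u v h => Hmuth _ _ (Hsub' _ _ h))) Hsub').
- apply: Hpsimin; first exact: Hadm.
  by move=> x y h; apply: Hthpsi; apply: Hmuth.
Qed.
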